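(* Let $D$ be a pv-monoid (idempotent, with symmetric valuation function), $P$ a nonempty finite set of ports, $J$ a nonempty finite index set and $m_j$ ($j\in J$) full monomials over $P$. Then there exists a unique $\overline\gamma\in C(P)$ such that for every $\gamma\in C(P)$: $\left\|\sum_{j\in J}m_j\right\|(\gamma)=1$ if $\gamma=\overline\gamma$, and $\left\|\sum_{j\in J}m_j\right\|(\gamma)=0$ otherwise.
   Context: A pv-monoid $(D,\oplus,\mathrm{val},\otimes,0,1)$ consists of a commutative monoid $(D,\oplus,0)$, a map $\mathrm{val}$ from nonempty finite sequences over $D$ to $D$ with $\mathrm{val}(d)=d$ and $\mathrm{val}(d_1,\dots,d_n)=0$ whenever some $d_i=0$, a binary operation $\otimes$ and an element $1$ with $\mathrm{val}(1,\dots,1)=1$, $0\otimes d=d\otimes0=0$, $1\otimes d=d\otimes1=d$. Standing assumption: $D$ is idempotent and $\mathrm{val}$ is symmetric. $I(P)$ is the set of nonempty subsets of $P$, $C(P)$ the set of nonempty subsets of $I(P)$. PIL formulas: $\phi::=true\mid p\mid\overline{\phi}\mid\phi\vee\phi$ ($p\in P$), $\alpha\models_i p$ iff $p\in\alpha$, negation and disjunction as usual, $\wedge$ via De Morgan. A full monomial is a PIL formula $\bigwedge_{p\in P_+}p\wedge\bigwedge_{p\in P_-}\overline p$ with $P_+\cup P_-=P$, $P_+\cap P_-=\emptyset$. PCL formulas: $f::=true\mid\phi\mid\neg f\mid f\sqcup f\mid f+f$; $\gamma\models\phi$ iff every $\alpha\in\gamma$ satisfies $\phi$; $\neg,\sqcup$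 are complement and union; $\gamma\models f_1+f_2$ iff $\gamma=\gamma_1\cup\gamma_2$ with $\gamma_1,\gamma_2\in C(P)$, $\gamma_1\models f_1,\gamma_2\models f_2$. $\sum_{j\in J}m_j$ is the $+$-combination of the $m_j$. For a PCL formula $f$ viewed as a weighted formula, $\|f\|(\gamma)=1$ if $\gamma\models f$ and $0$ otherwise. *)

(* Defs.v *)
From Stdlib Require List Permutation.
From mathcomp Require Import all_boot.
Set Implicit Arguments. Unset Strict Implicit. Unset Printing Implicit Defensive.

(* val is defined on nonempty finite sequences; a nonempty sequence
   d_1,...,d_n is encoded as (d_1, [:: d_2; ...; d_n]). *)
Record pvMonoid := PvMonoid {
  pv_car :> Type;
  pv_add : pv_car -> pv_car -> pv_car;
  pv_val : pv_car -> seq pv_car -> pv_car;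
  pv_mul : pv_car -> pv_car -> pv_car;
  pv_zero : pv_car;
  pv_one : pv_car;
  pv_addA : forall x y z, pv_add x (pv_add y z) = pv_add (pv_add x y) z;
  pv_addC : forall x y, pv_add x y = pv_add y x;
  pv_add0 : forall x, pv_add pv_zero x = x;
  pv_val1 : forall d, pv_val d [::] = d;
  pv_val0 : forall d ds, (d = pv_zero \/ List.In pv_zero ds) -> pv_val d ds = pv_zero;
  pv_val_one : forall n, pv_val pv_one (nseq n pv_one) = pv_one;
  pv_mul0l : forall d, pv_mul pv_zero d = pv_zero;
  pv_mul0r : forall d, pv_mul d pv_zero = pv_zero;
  pv_mul1l : forall d, pv_mul pv_one d = d;
  pv_mul1r : forall d, pv_mul d pv_one = d;
  pv_idem : forall d, pv_add d d = d;
  pv_val_sym : forall d ds e es, Permutation.Permutation (d :: ds) (e :: es) -> pv_val d ds = pv_val e es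
}.

Section PCL.
Variable P : finType.

Definition inI (a : {set P}) : bool := a != set0.
Definition inC (g : {set {set P}}) : bool := (g != set0) && [forall a in g, inI a].

Inductive pil : Type :=
| PTrue : pil
| PVar : P -> pil
| PNot : pil -> pil
| POr : pil -> pil -> pil.

Fixpoint pil_sat (a : {set P}) (phi : pil) : bool :=
  match phi with
  | PTrue => true
  | PVar p => p \in a
  | PNot f => ~~ pil_sat a f
  | POr f g => pil_sat a f || pil_sat a g
  end.

Definition PAnd (f g : pil) : pil := PNot (POr (PNot f) (PNot g)).

(** full monomial with P_+ = Pplus and P_- = P \ Pplus:
    /\_{p in P+} p /\ /\_{p in P-} ~p  (conjunction over an enumeration of P) *)
Definition full_monomial (Pplus : {set P}) : pil :=
  foldr (fun p acc => PAnd (if p \in Pplus then PVar p else PNot (PVar p)) acc)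
        PTrue (enum P).

Inductive pcl : Type :=
| CTrue : pcl
| CPil : pil -> pcl
| CNeg : pcl -> pcl
| CJoin : pcl -> pcl -> pcl
| CPlus : pcl -> pcl -> pcl.

Fixpoint pcl_sat (g : {set {set P}}) (f : pcl) : bool :=
  match f with
  | CTrue => true
  | CPil phi => [forall a in g, pil_sat a phi]
  | CNeg f1 => ~~ pcl_sat g f1
  | CJoin f1 f2 => pcl_sat g f1 || pcl_sat g f2
  | CPlus f1 f2 =>
      [exists g1 : {set {set P}}, exists g2 : {set {set P}},
         [&& inC g1, inC g2, g == g1 :|: g2, pcl_sat g1 f1 & pcl_sat g2 f2]]
  end.

(** +-combination of a nonempty list of formulas (f1 + (f2 + ... + fn));
    the value on the empty list is irrelevant (never used). *)
Fixpoint pcl_plus_seq (s : seq pcl) : pcl :=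
  match s with
  | [::] => CTrue
  | [:: f] => f
  | f :: s' => CPlus f (pcl_plus_seq s')
  end.

Definition pcl_sum (J : finType) (m : J -> pcl) : pcl :=
  pcl_plus_seq [seq m j | j <- enum J].

(** PCL formula viewed as a weighted formula over D *)
Definition wsem (D : pvMonoid) (f : pcl) (g : {set {set P}}) : D :=
  if pcl_sat g f then pv_one D else pv_zero D.

End PCL.

(* Main.v *)
Require Import Defs.
From mathcomp Require Import all_boot.
Set Implicit Arguments. Unset Strict Implicit. Unset Printing Implicit Defensive.

Lemma fm_sat (P : finType) (S a : {set P}) : pil_sat a (full_monomial S) = (a == S).
Proof.
rewrite /full_monomial.
have -> : pil_sat a (foldr (fun p acc => PAnd (if p \in S then PVar p else PNot (PVar p)) acc)
        (PTrue P) (enum P)) = all (fun p => (p \in a) == (p \in S)) (enum P).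
  elim: (enum P) => [|p s IH] //=.
  rewrite /PAnd /= IH; case: (p \in S) => /=; rewrite ?negbK;
  by case: (p \in a) => /=; rewrite ?negbK ?andbT ?andbF ?orbF ?orbT.
apply/allP/eqP => [H|->]; last by move=> p _; rewrite eqxx.
by apply/setP => p; apply/eqP; apply: H; rewrite mem_enum.
Qed.

Lemma single_sat (P : finType) (S : {set P}) g : inC g ->
  pcl_sat g (CPil (full_monomial S)) = (g == [set S]).
Proof.
case/andP=> g0 _ /=.
apply/forallP/eqP => [H|->].
  apply/eqP; rewrite eqEsubset; apply/andP; split.
    apply/subsetP => a ag; have := H a; rewrite ag /= fm_sat => /eqP ->.
    by rewrite set11.
  apply/subsetP => a; rewrite in_set1 => /eqP ->.
  case/set0Pn: g0 => b bg; have := H b; rewrite bg /= fm_sat => /eqP <-//.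
by move=> a; apply/implyP; rewrite in_set1 fm_sat.
Qed.

Lemma inC_seq (P : finType) (s : seq {set P}) : s != [::] -> all (fun X => X != set0) s ->
  inC [set X | X \in s].
Proof.
case: s => [|X s] // _ H; apply/andP; split.
  by apply/set0Pn; exists X; rewrite inE mem_head.
apply/forallP => a; apply/implyP; rewrite inE => as_.
by move/allP: H => /(_ a as_).
Qed.

Lemma plus_satE (P : finType) (g : {set {set P}}) f1 f2 :
  pcl_sat g (CPlus f1 f2) = [exists g1 : {set {set P}}, exists g2 : {set {set P}},
         [&& inC g1, inC g2, g == g1 :|: g2, pcl_sat g1 f1 & pcl_sat g2 f2]].
Proof. by []. Qed.

Lemma seq_sat (P : finType) (s : seq {set P}) g : s != [::] ->
  all (fun X => X != set0) s -> inC g ->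
  pcl_sat g (pcl_plus_seq [seq CPil (full_monomial X) | X <- s]) = (g == [set X | X \in s]).
Proof.
elim: s g => [|X s IH] g // _ Hall gC.
case: s IH Hall => [|Y s] IH Hall.
  rewrite [pcl_plus_seq _]/= single_sat //.
  by congr (g == _); apply/setP => x; rewrite !inE.
have Hall' : all (fun X => X != set0) (Y :: s) by case/andP: Hall.
have HS : X != set0 by case/andP: Hall.
change (pcl_sat g (CPlus (CPil (full_monomial X))
   (pcl_plus_seq [seq CPil (full_monomial Z0) | Z0 <- Y :: s])) = (g == [set Z0 | Z0 \in X :: Y :: s])).
rewrite plus_satE.
apply/existsP/eqP => [[g1 /existsP [g2 /and5P [c1 c2 /eqP -> h1 h2]]]|->].
  move: h1 h2; rewrite single_sat // IH // => /eqP -> /eqP ->.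
  by apply/setP => x; rewrite !inE.
exists [set X]; apply/existsP; exists [set Z0 | Z0 \in Y :: s].
have c1 : inC [set X].
  apply/andP; split; first by apply/set0Pn; exists X; rewrite set11.
  by apply/forallP => a; apply/implyP; rewrite in_set1 => /eqP ->.
have c2 := inC_seq (isT : Y :: s != [::]) Hall'.
rewrite c1 c2 single_sat // IH // !eqxx /= andbT.
by apply/eqP/setP => x; rewrite !inE.
Qed.

Theorem mainTheorem10 (D : pvMonoid) (hD : pv_zero D <> pv_one D)
  (P : finType) (hP : 0 < #|P|) (J : finType) (hJ : 0 < #|J|)
  (Pplus : J -> {set P}) (hPplus : forall j, Pplus j != set0) :
  exists! gbar : {set {set P}},
    inC gbar /\
    forall g : {set {set P}}, inC g ->
      wsem D (pcl_sum (fun j => CPil (full_monomial (Pplus j)))) g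
      = (if g == gbar then pv_one D else pv_zero D).
Proof.
set s := [seq Pplus j | j <- enum J].
have sn : s != [::].
  rewrite /s; case E: (enum J) => [|j e] //.
  by move: hJ; rewrite cardE E.
have sa : all (fun X => X != set0) s by apply/allP => x /mapP [j _ ->].
have key : forall g, inC g ->
  wsem D (pcl_sum (fun j => CPil (full_monomial (Pplus j)))) g
  = (if g == [set X | X \in s] then pv_one D else pv_zero D).
  move=> g gC; rewrite /wsem /pcl_sum.
  have -> : [seq CPil (full_monomial (Pplus j)) | j <- enum J]
          = [seq CPil (full_monomial X) | X <- s] by rewrite /s -map_comp.
  by rewrite seq_sat.
exists [set X | X \in s]; split; first by split => //; apply: inC_seq.
move=> g' [g'C H].
have := H _ (inC_seq sn sa); rewrite key ?(inC_seq sn sa) // eqxx.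
by case: eqP => // _ /esym.
Qed.
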